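(* Let $\pi$ be a group with an epimorphism $\phi\colon\pi\to\mathbb{Z}=\langle t\rangle$. Suppose $\pi$ is an ascending HNN extension of a finitely generated group $B$ compatible with $\phi$, i.e. $\pi=\langle t,B\mid t^{-1}bt=\varphi(b),\ b\in B\rangle$ for a monomorphism $\varphi\colon B\to B$, with $\phi(t)=1$ and $\phi(B)=0$. Then the top coefficient of the Alexander polynomial $\Delta_{\pi,\phi}$ equals $\pm1$. Likewise, if $\pi$ is a descending HNN extension of a finitely generated group $B$ compatible with $\phi$ (i.e. $\pi=\langle t,B\mid tbt^{-1}=\varphi(b),\ b\in B\rangle$ with $\varphi\colon B\to B$ a monomorphism, $\phi(t)=1$, $\phi(B)=0$), then the bottom coefficient of $\Delta_{\pi,\phi}$ equals $\pm1$.
   Context: For a group $\pi$ with epimorphism $\phi\colon\pi\to\mathbb{Z}=\langle t\rangle$, the Alexander module is $H_1(\pi;\mathbb{Z}[t^{\pm1}])=H_1(\operatorname{Ker}\phi;\mathbb{Z})$, a $\mathbb{Z}[t^{\pm1}]$-module with $t$ acting via conjugation by a lift of $t$. The Alexander polynomial $\Delta_{\pi,\phi}\in\mathbb{Z}[t^{\pm1}]$ is the order of this module (the gcd of the maximal minors of a presentation matrix), well defined up to multiplication by units $\pm t^j$; in particular its top and bottom coefficients are well defined up to sign. *)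

(* Defs.v *)
(* Abstract (possibly infinite) groups are given by an explicit
   record of operations and axioms. *)
From HB Require Import structures.
From mathcomp Require Import all_boot all_order all_algebra.
Set Implicit Arguments. Unset Strict Implicit. Unset Printing Implicit Defensive.
Import Order.TTheory GRing.Theory Num.Theory.
Local Open Scope ring_scope.

Record group := Group {
  gcar :> Type;
  gmul : gcar -> gcar -> gcar;
  gone : gcar;
  ginv : gcar -> gcar;
  gmulA : forall x y z, gmul x (gmul y z) = gmul (gmul x y) z;
  gmul1 : forall x, gmul gone x = x;
  gmulV : forall x, gmul (ginv x) x = gone }.

Definition is_hom (G H : group) (f : G -> H) : Prop :=
  forall x y, f (gmul x y) = gmul (f x) (f y).

Definition is_hom_Z (G : group) (f : G -> int) : Prop :=
  forall x y, f (gmul x y) = f x + f y.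

Definition is_epi_Z (G : group) (f : G -> int) : Prop :=
  is_hom_Z f /\ forall z : int, exists x, f x = z.

Inductive gen (G : group) (S : G -> Prop) : G -> Prop :=
  | gen_base x : S x -> gen S x
  | gen_one : gen S (gone G)
  | gen_mul x y : gen S x -> gen S y -> gen S (gmul x y)
  | gen_inv x : gen S x -> gen S (ginv x).

Definition fin_gen (G : group) : Prop :=
  exists (n : nat) (g : 'I_n -> G), forall x : G, gen (fun y => exists i, y = g i) x.

Definition ascHNN (pi : group) (phi : pi -> int) : Prop :=
  exists (B : group) (psi : B -> B) (iota : B -> pi) (t : pi),
    [/\ fin_gen B /\ is_hom psi /\ injective psi /\ is_hom iota,
        phi t = 1, (forall b, phi (iota b) = 0),
        (forall b, gmul (gmul (ginv t) (iota b)) t = iota (psi b)) &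
        (forall (G : group) (g : G) (f : B -> G), is_hom f ->
           (forall b, gmul (gmul (ginv g) (f b)) g = f (psi b)) ->
           exists h : pi -> G,
             [/\ is_hom h, h t = g, (forall b, h (iota b) = f b) &
                 forall h' : pi -> G, is_hom h' -> h' t = g ->
                   (forall b, h' (iota b) = f b) -> forall x, h' x = h x])].

Definition descHNN (pi : group) (phi : pi -> int) : Prop :=
  exists (B : group) (psi : B -> B) (iota : B -> pi) (t : pi),
    [/\ fin_gen B /\ is_hom psi /\ injective psi /\ is_hom iota,
        phi t = 1, (forall b, phi (iota b) = 0),
        (forall b, gmul (gmul t (iota b)) (ginv t) = iota (psi b)) &
        (forall (G : group) (g : G) (f : B -> G), is_hom f ->
           (forall b, gmul (gmul g (f b)) (ginv g) = f (psi b)) ->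
           exists h : pi -> G,
             [/\ is_hom h, h t = g, (forall b, h (iota b) = f b) &
                 forall h' : pi -> G, is_hom h' -> h' t = g ->
                   (forall b, h' (iota b) = f b) -> forall x, h' x = h x])].

Section Alex.
Variables (pi : group) (phi : pi -> int) (s : pi).

Definition in_commK (x : pi) : Prop :=
  gen (fun y => exists a b, [/\ phi a = 0, phi b = 0 &
         y = gmul (gmul (ginv a) (ginv b)) (gmul a b)]) x.

Definition prod_list (l : seq pi) : pi := foldr (@gmul pi) (gone pi) l.

Definition gpow (x : pi) (z : int) : pi :=
  match z with
  | Posz n => iter n (gmul x) (gone pi)
  | Negz n => iter n.+1 (gmul (ginv x)) (gone pi)
  end.

(* action of t^i on K: x |-> s^-i x s^i  (s a lift of t) *)
Definition tpow (i : nat) (x : pi) : pi :=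
  iter i (fun y => gmul (gmul (ginv s) y) s) x.

(* p . [x] for p in Z[t], written multiplicatively in pi *)
Definition act (p : {poly int}) (x : pi) : pi :=
  prod_list [seq gpow (tpow i x) p`_i | i <- iota 0 (size p)].

Definition evalv (n : nat) (k : 'I_n -> pi) (v : 'rV[{poly int}]_n) : pi :=
  prod_list [seq act (v ord0 j) (k j) | j <- enum 'I_n].

(* A : 'M_(m,n) (rows = relations) presents H_1(Ker phi) over Z[t^{+-1}]
   with respect to the generators k_1..k_n (entries cleared of negative
   powers of t, which is no loss of generality). *)
Definition presents (n m : nat) (k : 'I_n -> pi) (A : 'M[{poly int}]_(m, n)) : Prop :=
  [/\ (forall j, phi (k j) = 0),
      (forall x, phi x = 0 -> exists (N : nat) (v : 'rV[{poly int}]_n),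
          in_commK (gmul (ginv (tpow N x)) (evalv k v))),
      (forall r : 'I_m, in_commK (evalv k (row r A))) &
      (forall v : 'rV[{poly int}]_n, in_commK (evalv k v) ->
          exists (N : nat) (w : 'rV[{poly int}]_m), 'X^N *: v = w *m A)].
End Alex.

(* divisibility in Z[t^{+-1}] for elements represented by polynomials *)
Definition ldvd (p q : {poly int}) : Prop :=
  exists (N : nat) (r : {poly int}), 'X^N * q = r * p.

Definition minor (n m : nat) (A : 'M[{poly int}]_(m, n)) (f : 'I_n -> 'I_m) : {poly int} :=
  \det (rowsub f A).

Definition gcd_minors (n m : nat) (A : 'M[{poly int}]_(m, n)) (d : {poly int}) : Prop :=
  (forall f, ldvd d (minor A f)) /\
  (forall e, (forall f, ldvd e (minor A f)) -> ldvd e d).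

(* d represents the Alexander polynomial Delta_{pi,phi} (up to units +-t^j) *)
Definition is_alex_poly (pi : group) (phi : pi -> int) (d : {poly int}) : Prop :=
  exists (s : pi) (n m : nat) (k : 'I_n -> pi) (A : 'M[{poly int}]_(m, n)),
    [/\ phi s = 1, presents phi s k A & gcd_minors A d].

Definition top_coef (p : {poly int}) : int := lead_coef p.
Definition bot_coef (p : {poly int}) : int := p`_(find (fun c => c != 0) p).

(* Main.v *)
From HB Require Import structures.
From mathcomp Require Import all_boot all_order all_algebra all_fingroup zify.
From mathcomp Require Import boolp.
From Stdlib Require Import ProofIrrelevance FunctionalExtensionality PropExtensionality IndefiniteDescription.
Require Import Defs.
Set Implicit Arguments. Unset Strict Implicit. Unset Printing Implicit Defensive.
Import GRing.Theory.
Local Open Scope ring_scope.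


Notation "x ** y" := (gmul x y) (at level 40, left associativity).

Section GroupBasics.
Variable G : group.
Implicit Types x y z : G.

Lemma xmulgV x : x ** ginv x = gone G.
Proof.
have e: x ** ginv x = ginv (ginv x) ** ginv x ** (x ** ginv x).
  by rewrite gmulV gmul1.
by rewrite e -!gmulA (gmulA (ginv x) x) gmulV gmul1 gmulV.
Qed.
Lemma xmulg1 x : x ** gone G = x.
Proof. by rewrite -(gmulV x) gmulA xmulgV gmul1. Qed.
Lemma xinvgK x : ginv (ginv x) = x.
Proof. by rewrite -[RHS]gmul1 -(gmulV (ginv x)) -gmulA gmulV xmulg1. Qed.
Lemma xmulKg x y : ginv x ** (x ** y) = y.
Proof. by rewrite gmulA gmulV gmul1. Qed.
Lemma xmulKVg x y : x ** (ginv x ** y) = y.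
Proof. by rewrite gmulA xmulgV gmul1. Qed.
Lemma xmulgK x y : y ** x ** ginv x = y.
Proof. by rewrite -gmulA xmulgV xmulg1. Qed.
Lemma xmulgKV x y : y ** ginv x ** x = y.
Proof. by rewrite -gmulA gmulV xmulg1. Qed.
Lemma xinvg_uniq x y : x ** y = gone G -> ginv x = y.
Proof. by move=> e; rewrite -[LHS]xmulg1 -e xmulKg. Qed.
Lemma xinvMg x y : ginv (x ** y) = ginv y ** ginv x.
Proof. apply: xinvg_uniq; by rewrite -gmulA (gmulA y) xmulgV gmul1 xmulgV. Qed.
Lemma xinvg1 : ginv (gone G) = gone G.
Proof. by apply: xinvg_uniq; rewrite gmul1. Qed.
Lemma xmulg_injl x y z : x ** y = x ** z -> y = z.
Proof. by move=> e; rewrite -(xmulKg x y) e xmulKg. Qed.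
End GroupBasics.

Section Homs.
Variables G H : group.
Variable f : G -> H.
Hypothesis hf : is_hom f.
Lemma hom1 : f (gone G) = gone H.
Proof. apply: (@xmulg_injl _ (f (gone G))). by rewrite -hf gmul1 xmulg1. Qed.
Lemma homV x : f (ginv x) = ginv (f x).
Proof. apply/esym/xinvg_uniq. by rewrite -hf xmulgV hom1. Qed.
End Homs.

Section HomZ.
Variables (G : group) (phi : G -> int).
Hypothesis hphi : is_hom_Z phi.
Lemma phi1 : phi (gone G) = 0.
Proof. have := hphi (gone G) (gone G). rewrite gmul1 => e. by apply: (addrI (phi (gone G))); rewrite addr0 -e. Qed.
Lemma phiV x : phi (ginv x) = - phi x.
Proof. apply/eqP. by rewrite -addr_eq0 -hphi gmulV phi1. Qed.
End HomZ.


Definition wconj (dir : bool) (G : group) (g x : G) : G :=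
  if dir then ginv g ** x ** g else g ** x ** ginv g.

Section SubGen.
Variables (pi : group) (S : pi -> Prop).
Definition subT := {x : pi | gen S x}.
Lemma subT_inj (a b : subT) : proj1_sig a = proj1_sig b -> a = b.
Proof. case: a b => [a pa] [b pb] /= e; subst b; f_equal; apply: proof_irrelevance. Qed.
Definition smul (a b : subT) : subT :=
  exist _ (proj1_sig a ** proj1_sig b) (gen_mul (proj2_sig a) (proj2_sig b)).
Definition sone : subT := exist _ (gone pi) (@gen_one _ S).
Definition sinv (a : subT) : subT := exist _ (ginv (proj1_sig a)) (gen_inv (proj2_sig a)).
Lemma smulA a b c : smul a (smul b c) = smul (smul a b) c.
Proof. by apply: subT_inj; rewrite /= gmulA. Qed.
Lemma smul1 a : smul sone a = a.
Proof. by apply: subT_inj; rewrite /= gmul1. Qed.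
Lemma smulV a : smul (sinv a) a = sone.
Proof. by apply: subT_inj; rewrite /= gmulV. Qed.
Definition subG : group := @Defs.Group subT smul sone sinv smulA smul1 smulV.
End SubGen.

Lemma gen_univ (dir : bool) (pi B : group) (psi : B -> B) (iota : B -> pi) (t : pi) :
  is_hom iota ->
  (forall b, wconj dir t (iota b) = iota (psi b)) ->
  (forall (G : group) (g : G) (f : B -> G), is_hom f ->
           (forall b, wconj dir g (f b) = f (psi b)) ->
           exists h : pi -> G,
             [/\ is_hom h, h t = g, (forall b, h (iota b) = f b) &
                 forall h' : pi -> G, is_hom h' -> h' t = g ->
                   (forall b, h' (iota b) = f b) -> forall x, h' x = h x]) ->
  forall x, gen (fun y => y = t \/ exists b, y = iota b) x.
Proof.
move=> hiota hrel U x.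
set S := (fun y => y = t \/ exists b, y = iota b).
pose g : subG S := exist _ t (gen_base (or_introl erefl)).
pose f (b : B) : subG S := exist _ (iota b) (gen_base (or_intror (ex_intro _ b erefl))).
have hf : is_hom f by move=> a b; apply: subT_inj; rewrite /= hiota.
have hr : forall b, wconj dir g (f b) = f (psi b).
  move=> b; apply: subT_inj; rewrite /= -hrel; by case: (dir) hrel.
have [h [hh ht hi _]] := U _ g f hf hr.
have [h0 [hh0 ht0 hi0 un0]] := U pi t iota hiota hrel.
have e1 : forall y, proj1_sig (h y) = h0 y.
  apply: un0 => //; first by move=> a b; rewrite hh.
  - by rewrite ht.
  - by move=> b; rewrite hi.
have e2 : forall y : pi, y = h0 y by apply: un0.
have -> : x = proj1_sig (h x) by rewrite e1 -e2.
by case: (h x).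
Qed.


Definition pw (G : group) (x : G) (n : nat) : G := iter n (gmul x) (gone G).

Section Pw.
Variable G : group.
Implicit Types x y : G.
Lemma pwS x n : pw x n.+1 = x ** pw x n. Proof. by []. Qed.
Lemma pw0 x : pw x 0 = gone G. Proof. by []. Qed.
Lemma pwSr x n : pw x n.+1 = pw x n ** x.
Proof.
elim: n => [|n IH]; first by rewrite pwS pw0 xmulg1 gmul1.
by rewrite [LHS]pwS IH gmulA -pwS -IH.
Qed.
Lemma pwVK x n : pw (ginv x) n ** pw x n = gone G.
Proof.
elim: n => [|n IH]; first by rewrite gmul1.
by rewrite pwSr pwS -gmulA (gmulA (ginv x)) gmulV gmul1 IH.
Qed.
Lemma pwKV x n : pw x n ** pw (ginv x) n = gone G.
Proof. by rewrite -{1}(xinvgK x) pwVK. Qed.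
End Pw.

Section NormalForm.
Variables (pi B : group) (psi : B -> B) (iota : B -> pi) (u : pi).
Hypothesis hiota : is_hom iota.
Hypothesis hrel : forall b, ginv u ** iota b ** u = iota (psi b).

Lemma rel1 b : iota b ** u = u ** iota (psi b).
Proof. by rewrite -hrel -!gmulA xmulKVg. Qed.
Lemma rel2 b : ginv u ** iota b = iota (psi b) ** ginv u.
Proof. by rewrite -hrel xmulgK. Qed.
Lemma relN b n : iota b ** pw u n = pw u n ** iota (iter n psi b).
Proof.
elim: n => [|n IH]; first by rewrite xmulg1 gmul1.
by rewrite pwSr gmulA IH -gmulA rel1 gmulA -pwSr.
Qed.

Definition NF (x : pi) := exists N M b, x = pw u N ** iota b ** pw (ginv u) M.

Lemma NF_u x : NF x -> NF (u ** x).
Proof. case=> N [M [b ->]]; exists N.+1, M, b; by rewrite !gmulA. Qed.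
Lemma NF_iota c x : NF x -> NF (iota c ** x).
Proof.
case=> N [M [b ->]]; exists N, M, (iter N psi c ** b).
by rewrite !gmulA relN hiota !gmulA.
Qed.
Lemma NF_uinv x : NF x -> NF (ginv u ** x).
Proof.
case=> [[|N]] [M [b ->]].
  exists 0%N, M.+1, (psi b).
  by rewrite !pw0 !gmul1 gmulA rel2 pwS gmulA.
exists N, M, b; by rewrite pwS !gmulA gmulV gmul1.
Qed.

Variable S : pi -> Prop.
Hypothesis hS : forall y, S y -> [\/ y = u, y = ginv u | exists b, y = iota b].

Lemma gen_NF x : gen S x -> NF x.
Proof.
move=> gx.
suff [H1 _] : (forall y, NF y -> NF (x ** y)) /\ (forall y, NF y -> NF (ginv x ** y)).
  rewrite -(xmulg1 x); apply: H1; exists 0%N, 0%N, (gone B).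
  by rewrite !pw0 (hom1 hiota) !gmul1.
elim: gx => {x}.
- move=> x /hS [->|->|[b ->]].
  + split; [exact: NF_u | exact: NF_uinv].
  + by rewrite xinvgK; split; [exact: NF_uinv | exact: NF_u].
  + by rewrite -(homV hiota); split; exact: NF_iota.
- by rewrite (xinvg1 pi); split=> y; rewrite gmul1.
- move=> x y _ [Hx Hx'] _ [Hy Hy']; split=> z hz.
    by rewrite -gmulA; apply: Hx; apply: Hy.
  by rewrite xinvMg -gmulA; apply: Hy'; apply: Hx'.
- move=> x _ [Hx Hx']; split; first by [].
  by rewrite xinvgK.
Qed.
End NormalForm.

Lemma phi_pw (G : group) (phi : G -> int) : is_hom_Z phi ->
  forall x n, phi (pw x n) = (n%:Z) * phi x.
Proof.
move=> hphi x; elim=> [|n IH]; first by rewrite /= (phi1 hphi) mul0r.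
by rewrite pwS hphi IH -{1}(mul1r (phi x)) -mulrDl intS.
Qed.


Lemma horner_mx_sum (R : comNzRingType) r (C : 'M[R]_r.+1) (p : {poly R}) :
  horner_mx C p = \sum_(k < size p) p`_k *: C ^+ k.
Proof.
rewrite -{1}(coefK p) poly_def rmorph_sum; apply: eq_bigr => k _.
by rewrite -mul_polyC rmorphM /= horner_mx_C rmorphXn /= horner_mx_X -scalemx1 -scalerAl mul1r.
Qed.

Section Trick.
Variables (V : zmodType) (T : {additive V -> V}).
Definition scg (p : {poly int}) (x : V) := \sum_(i < size p) (iter i T x) *~ p`_i.

Lemma iter_sum n (I : Type) (l : seq I) (F : I -> V) :
  iter n T (\sum_(i <- l) F i) = \sum_(i <- l) iter n T (F i).
Proof. elim: n => [|n IH] //=; by rewrite IH raddf_sum. Qed.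
Lemma iter_mulz n x z : iter n T (x *~ z) = iter n T x *~ z.
Proof. elim: n => [|n IH] //=; by rewrite IH raddfMz. Qed.
Lemma iter0 n : iter n T 0 = 0.
Proof. elim: n => [|n IH] //=; by rewrite IH raddf0. Qed.

Lemma scg_wide (p : {poly int}) (x : V) m : (size p <= m)%N -> scg p x = \sum_(i < m) (iter i T x) *~ p`_i.
Proof.
move=> hm; rewrite /scg (big_ord_widen m (fun i => iter i T x *~ p`_i) hm) big_mkcond /=.
apply: eq_bigr => i _; case: ifP => // /negbT; rewrite -leqNgt => hi.
by rewrite nth_default // mulrz0.
Qed.

Variables (r : nat) (h : 'I_r.+1 -> V) (C : 'M[int]_r.+1).
Definition lin (w : 'I_r.+1 -> 'I_r.+1 -> int) i := \sum_j h j *~ w i j.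

Lemma lin1 i : lin (fun i j => (1%:M : 'M[int]_r.+1) i j) i = h i.
Proof.
rewrite /lin (bigD1 i) //= mxE eqxx mulr1z big1 ?addr0 //.
by move=> j /negbTE hj; rewrite mxE eq_sym hj mulr0z.
Qed.

Lemma linC (D : 'M[int]_r.+1) (F : 'I_r.+1 -> V) i :
  (forall j, F j = lin (fun a b => C a b) j) ->
  \sum_j F j *~ D i j = lin (fun a b => (D *m C) a b) i.
Proof.
move=> hF; rewrite /lin; under eq_bigr do rewrite hF /lin mulrz_suml.
rewrite exchange_big /=; apply: eq_bigr => l _; rewrite mxE mulrz_sumr.
by apply: eq_bigr => j _; rewrite mulrzA_C mulrC.
Qed.

Lemma lin_horner (p : {poly int}) i :
  \sum_(k < size p) lin (fun a b => (C ^+ k) a b) i *~ p`_k = lin (fun a b => horner_mx C p a b) i.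
Proof.
rewrite /lin; under eq_bigr do rewrite mulrz_suml.
rewrite exchange_big /=; apply: eq_bigr => j _.
rewrite horner_mx_sum summxE mulrz_sumr; apply: eq_bigr => k _.
by rewrite mxE mulrzA_C.
Qed.

Lemma lin_CH i : lin (fun a b => horner_mx C (char_poly C) a b) i = 0.
Proof. rewrite Cayley_Hamilton /lin big1 // => j _; by rewrite mxE mulr0z. Qed.

Hypothesis hasc : forall i, T (h i) = lin (fun a b => C a b) i.
Lemma asc_iter n i : iter n T (h i) = lin (fun a b => (C ^+ n) a b) i.
Proof.
elim: n i => [|n IH] i; first by rewrite expr0 lin1.
rewrite iterS IH /lin raddf_sum exprSr.
apply: etrans (_ : _ = \sum_j T (h j) *~ (C ^+ n) i j) _.
  by apply: eq_bigr => j _; rewrite raddfMz.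
exact: (@linC (C ^+ n) (fun j => T (h j))).
Qed.
Lemma asc_ann i : scg (char_poly C) (h i) = 0.
Proof.
rewrite /scg; under eq_bigr do rewrite asc_iter.
by rewrite lin_horner lin_CH.
Qed.
End Trick.

Section Trick2.
Variables (V : zmodType) (T : {additive V -> V}).
Variables (r : nat) (h : 'I_r.+1 -> V) (C : 'M[int]_r.+1).
Hypothesis hdesc : forall i, h i = T (lin h (fun a b => C a b) i).
Lemma desc_iter n i : h i = iter n T (lin h (fun a b => (C ^+ n) a b) i).
Proof.
elim: n i => [|n IH] i; first by rewrite expr0 lin1.
rewrite IH exprSr iterSr; congr (iter n T _).
apply: etrans (_ : _ = \sum_j T (lin h (fun a b => C a b) j) *~ (C ^+ n) i j) _.
  by apply: eq_bigr => j _; rewrite -hdesc.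
under eq_bigr do rewrite -raddfMz.
rewrite -raddf_sum; congr (T _).
exact: (@linC V r h C (C ^+ n) (fun j => lin h (fun a b => C a b) j) i (fun j => erefl)).
Qed.

Definition revchi := \poly_(k < r.+2) (char_poly C)`_(r.+1 - k).
Lemma revchi0 : revchi`_0 = 1.
Proof.
rewrite coef_poly /= subn0.
by have := monicP (char_poly_monic C); rewrite /lead_coef size_char_poly.
Qed.
Lemma desc_ann i : scg T revchi (h i) = 0.
Proof.
rewrite (scg_wide T (h i) (size_poly _ _)).
have e : forall k : 'I_r.+2, iter k T (h i) *~ revchi`_k =
   iter r.+1 T (lin h (fun a b => (C ^+ (r.+1 - k)) a b) i *~ (char_poly C)`_(r.+1 - k)).
  move=> k; rewrite coef_poly ltn_ord iter_mulz; congr (_ *~ _).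
  rewrite (desc_iter (r.+1 - k)) -iterD subnKC //; have := ltn_ord k; lia.
under eq_bigr do rewrite e.
rewrite -iter_sum (reindex_inj rev_ord_inj) /=.
have -> : \sum_(j < r.+2) lin h (fun a b => (C ^+ (r.+1 - (r.+2 - j.+1))) a b) i *~
        (char_poly C)`_(r.+1 - (r.+2 - j.+1)) =
        \sum_(j < size (char_poly C)) lin h (fun a b => (C ^+ j) a b) i *~ (char_poly C)`_j.
  rewrite size_char_poly; apply: eq_bigr => j _.
  have -> : (r.+1 - (r.+2 - j.+1) = j)%N.
    have := ltn_ord j; lia.
  by [].
by rewrite lin_horner lin_CH; exact: (iter0 T r.+1).
Qed.
End Trick2.

Section ScgLemmas.
Variables (V : zmodType) (T : {additive V -> V}).
Lemma iter_comm N i (x : V) : iter i T (iter N T x) = iter N T (iter i T x).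
Proof. by rewrite -!iterD addnC. Qed.
Lemma scg_iter p N (x : V) : scg T p (iter N T x) = iter N T (scg T p x).
Proof.
rewrite /scg (iter_sum T); apply: eq_bigr => i _; by rewrite iter_mulz iter_comm.
Qed.
Lemma scg_sum p (I : Type) (l : seq I) (F : I -> V) :
  scg T p (\sum_(i <- l) F i) = \sum_(i <- l) scg T p (F i).
Proof.
rewrite /scg exchange_big /=; apply: eq_bigr => i _; by rewrite iter_sum mulrz_suml.
Qed.
Lemma scg_mulz p (x : V) z : scg T p (x *~ z) = scg T p x *~ z.
Proof.
rewrite /scg mulrz_suml; apply: eq_bigr => i _; by rewrite iter_mulz -!mulrzA mulrC.
Qed.
Lemma scg0p (x : V) : scg T 0 x = 0.
Proof. by rewrite /scg size_poly0 big_ord0. Qed.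
End ScgLemmas.


Lemma int_unit (a b : int) : a * b = 1 -> b = 1 \/ b = -1.
Proof. move=> e; have: (`|a| * `|b| = 1)%N by rewrite -abszM e.
move/eqP; rewrite muln_eq1 => /andP [_ /eqP hb]; lia. Qed.

Lemma det_expand (R : comNzRingType) n m (W : 'M[R]_(n, m)) (A : 'M[R]_(m, n)) :
  \det (W *m A) = \sum_(f : {ffun 'I_n -> 'I_m}) (\prod_i W i (f i)) * \det (rowsub f A).
Proof.
rewrite /determinant.
transitivity (\sum_(s : {perm 'I_n}) \sum_(f : {ffun 'I_n -> 'I_m})
    (-1) ^+ s * \prod_i (W i (f i) * A (f i) (s i))).
  apply: eq_bigr => s _; rewrite -mulr_sumr; congr (_ * _).
  rewrite (eq_bigr (fun i => \sum_k W i k * A k (s i))); last by move=> i _; rewrite mxE.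
  by rewrite bigA_distr_bigA.
rewrite exchange_big /=; apply: eq_bigr => f _; rewrite mulr_sumr; apply: eq_bigr => s _.
rewrite big_split /= mulrCA; congr (_ * (_ * _)); apply: eq_bigr => i _; by rewrite !mxE.
Qed.

Lemma ldvd_add d p q : ldvd d p -> ldvd d q -> ldvd d (p + q).
Proof.
move=> [N [r e]] [M [r' e']]; exists (N + M)%N, ('X^M * r + 'X^N * r').
by rewrite exprD mulrDr mulrDl -!mulrA -e -e' !mulrA (mulrC 'X^N).
Qed.
Lemma ldvd_mull d c q : ldvd d q -> ldvd d (c * q).
Proof. move=> [N [r e]]; exists N, (c * r); by rewrite mulrCA e mulrA. Qed.
Lemma ldvd_sum d (I : Type) (l : seq I) (F : I -> {poly int}) :
  (forall i, ldvd d (F i)) -> ldvd d (\sum_(i <- l) F i).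
Proof.
move=> h; elim: l => [|i l IH]; first by rewrite big_nil; exists 0%N, 0; rewrite mulr0 mul0r.
by rewrite big_cons; apply: ldvd_add.
Qed.

Lemma top_ldvd (d g : {poly int}) (a : nat) : g \is monic -> ldvd d ('X^a * g) -> lead_coef d = 1 \/ lead_coef d = -1.
Proof.
move=> hg [N [r e]].
have : lead_coef ('X^N * ('X^a * g)) = 1 by rewrite !lead_coefM !lead_coefXn (monicP hg) !mul1r.
by rewrite e lead_coefM; apply: int_unit.
Qed.

Definition bidx (p : {poly int}) := find (fun c => c != 0) p.
Lemma bidx_spec (p : {poly int}) : p != 0 ->
  p`_(bidx p) != 0 /\ forall i, (i < bidx p)%N -> p`_i = 0.
Proof.
move=> hp; have hh : has (fun c => c != 0) p.
  apply/hasP; exists (lead_coef p); last by rewrite lead_coef_eq0.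
  by rewrite /lead_coef mem_nth // ltn_predL size_poly_gt0.
split; first exact: (nth_find 0 hh).
by move=> i hi; have := before_find 0 hi => /negbFE /eqP.
Qed.
Lemma bidx_eq (p : {poly int}) k : p`_k != 0 -> (forall i, (i < k)%N -> p`_i = 0) -> bidx p = k.
Proof.
move=> hk hlt; have hp : p != 0 by apply: contraNneq hk => ->; rewrite coef0.
have [h1 h2] := bidx_spec hp.
case: (ltngtP (bidx p) k) => // h.
  by move: h1; rewrite hlt ?eqxx.
by move: hk; rewrite h2 ?eqxx.
Qed.
Lemma bot_coefE p : bot_coef p = p`_(bidx p). Proof. by []. Qed.

Lemma bidxM (p q : {poly int}) : p != 0 -> q != 0 ->
  bidx (p * q) = (bidx p + bidx q)%N /\ bot_coef (p * q) = bot_coef p * bot_coef q.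
Proof.
move=> hp hq; have [p1 p2] := bidx_spec hp; have [q1 q2] := bidx_spec hq.
set a := bidx p in p1 p2 *; set b := bidx q in q1 q2 *.
have hlt : forall i, (i < a + b)%N -> (p * q)`_i = 0.
  move=> i hi; rewrite coefM big1 // => j _.
  case: (ltnP j a) => hj; first by rewrite p2 // mul0r.
  by rewrite q2 ?mulr0 //; have := ltn_ord j; lia.
have hab : (p * q)`_(a + b) = p`_a * q`_b.
  rewrite coefM (bigD1 (Ordinal (leq_addr b a : (a < (a + b).+1)%N))) //= addKn big1 ?addr0 //.
  move=> j hj; case: (ltnP j a) => h; first by rewrite p2 // mul0r.
  have : (j : nat) != a by apply: contraNneq hj => e; apply/eqP/val_inj.
  rewrite neq_ltn ltnNge h /= => hja.
  by rewrite q2 ?mulr0 //; have := ltn_ord j; lia.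
have hn : (p * q)`_(a + b) != 0 by rewrite hab mulf_neq0.
have e := bidx_eq hn hlt; split=> //; by rewrite !bot_coefE e hab.
Qed.

Lemma bot_monomial (g : {poly int}) (a : nat) : g`_0 = 1 -> bot_coef ('X^a * g) = 1.
Proof.
move=> hg; have gn0 : g != 0 by apply: contra_eq_neq hg => ->; rewrite coef0.
have [_ ->] := bidxM (monic_neq0 (monicXn int a)) gn0.
have -> : bot_coef g = 1 by rewrite bot_coefE (@bidx_eq g 0) ?hg ?oner_neq0.
rewrite mulr1 bot_coefE (@bidx_eq _ a) ?coefXn ?eqxx ?oner_neq0 //.
by move=> i hi; rewrite coefXn ltn_eqF.
Qed.

Lemma bot_ldvd (d g : {poly int}) (a : nat) : g`_0 = 1 -> ldvd d ('X^a * g) -> bot_coef d = 1 \/ bot_coef d = -1.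
Proof.
move=> hg [N [r e]].
have h1 : bot_coef ('X^N * ('X^a * g)) = 1 by rewrite mulrA -exprD bot_monomial.
have hne : 'X^N * ('X^a * g) != 0.
  apply/eqP => h0; move: h1; rewrite h0 /bot_coef coef0 => /eqP.
  by rewrite eq_sym oner_eq0.
rewrite e in h1 hne.
have rn : r != 0 by apply: contraNneq hne => ->; rewrite mul0r.
have dn : d != 0 by apply: contraNneq hne => ->; rewrite mulr0.
have [_ e2] := bidxM rn dn; rewrite e2 in h1; exact: int_unit h1.
Qed.


Definition cj (G : group) (g x : G) := ginv g ** x ** g.

Section Conj.
Variables (G : group) (g : G).
Lemma cjM x y : cj g (x ** y) = cj g x ** cj g y.
Proof. by rewrite /cj -!gmulA xmulKVg. Qed.
Lemma cjV x : cj g (ginv x) = ginv (cj g x).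
Proof. by rewrite /cj !xinvMg xinvgK gmulA. Qed.
Lemma cj1 : cj g (gone G) = gone G.
Proof. by rewrite /cj xmulg1 gmulV. Qed.
Lemma cjK x : cj (ginv g) (cj g x) = x.
Proof. by rewrite /cj xinvgK !gmulA xmulgV gmul1 xmulgK. Qed.
End Conj.

Section Quot.
Variables (pi : group) (phi : pi -> int).
Hypothesis hphi : is_hom_Z phi.
Local Notation N := (in_commK phi).

Lemma phi_cj g x : phi (cj g x) = phi x.
Proof. by rewrite /cj !hphi (phiV hphi) addrC addrA addrN add0r. Qed.

Lemma N_conj g x : N x -> N (cj g x).
Proof.
elim=> {x}.
- move=> x [a [b [ha hb ->]]]; apply: gen_base.
  exists (cj g a), (cj g b); rewrite !phi_cj; split=> //.
  by rewrite !cjM !cjV.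
- by rewrite cj1; apply: gen_one.
- by move=> x y _ Hx _ Hy; rewrite cjM; apply: gen_mul.
- by move=> x _ Hx; rewrite cjV; apply: gen_inv.
Qed.

Lemma N_K x : N x -> phi x = 0.
Proof.
elim=> {x}.
- move=> x [a [b [ha hb ->]]]; by rewrite !hphi !(phiV hphi) ha hb !oppr0 !addr0.
- exact: phi1.
- by move=> x y _ Hx _ Hy; rewrite hphi Hx Hy addr0.
- by move=> x _ Hx; rewrite (phiV hphi) Hx oppr0.
Qed.

Lemma N1 : N (gone pi). Proof. exact: gen_one. Qed.
Lemma NM x y : N x -> N y -> N (x ** y). Proof. exact: gen_mul. Qed.
Lemma NV x : N x -> N (ginv x). Proof. exact: gen_inv. Qed.
Lemma Ncomm a b : phi a = 0 -> phi b = 0 -> N (ginv a ** ginv b ** (a ** b)).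
Proof. by move=> ha hb; apply: gen_base; exists a, b. Qed.

Definition cls (x : pi) : pi -> Prop := fun y => N (ginv x ** y).
Lemma cls_eq x y : N (ginv x ** y) -> cls x = cls y.
Proof.
move=> nxy; apply: functional_extensionality => z; apply: propositional_extensionality.
rewrite /cls; split=> h.
  have -> : ginv y ** z = ginv (ginv x ** y) ** (ginv x ** z).
    by rewrite xinvMg xinvgK -gmulA xmulKVg.
  by apply: NM => //; apply: NV.
have -> : ginv x ** z = (ginv x ** y) ** (ginv y ** z) by rewrite -gmulA xmulKVg.
exact: NM.
Qed.
Lemma cls_inv x y : cls x = cls y -> N (ginv x ** y).
Proof. move=> e; have : cls y y by rewrite /cls gmulV; apply: N1. by rewrite -e. Qed.

Definition Ht := {X : pi -> Prop | exists x, phi x = 0 /\ X = cls x}.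
HB.instance Definition _ := gen_eqMixin Ht.
HB.instance Definition _ := gen_choiceMixin Ht.

Definition kk (x : pi) : pi := if phi x == 0 then x else gone pi.
Lemma kk0 x : phi (kk x) = 0.
Proof. rewrite /kk; case: eqP => // _; exact: phi1. Qed.
Definition q (x : pi) : Ht := exist _ (cls (kk x)) (ex_intro _ (kk x) (conj (kk0 x) erefl)).
Lemma Ht_inj (X Y : Ht) : proj1_sig X = proj1_sig Y -> X = Y.
Proof. case: X Y => [X pX] [Y pY] /= e; subst Y; f_equal; apply: proof_irrelevance. Qed.
Lemma qE x : phi x = 0 -> proj1_sig (q x) = cls x.
Proof. by move=> hx; rewrite /= /kk hx eqxx. Qed.
Lemma q_eq x y : phi x = 0 -> phi y = 0 -> (q x = q y <-> N (ginv x ** y)).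
Proof.
move=> hx hy; split.
  by move=> e; apply: cls_inv; rewrite -qE // -[cls y]qE // e.
by move=> n; apply: Ht_inj; rewrite !qE //; apply: cls_eq.
Qed.

Definition rep (X : Ht) : pi := proj1_sig (constructive_indefinite_description _ (proj2_sig X)).
Lemma rep0 X : phi (rep X) = 0.
Proof. rewrite /rep; case: constructive_indefinite_description => x [] //. Qed.
Lemma repK X : q (rep X) = X.
Proof.
apply: Ht_inj; rewrite /rep /q /kk; case: constructive_indefinite_description => x [hx e] /=.
by rewrite hx eqxx e.
Qed.

Definition Hadd (X Y : Ht) := q (rep X ** rep Y).
Definition Hopp (X : Ht) := q (ginv (rep X)).
Definition Hzero := q (gone pi).

Lemma qM x y : phi x = 0 -> phi y = 0 -> Hadd (q x) (q y) = q (x ** y).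
Proof.
move=> hx hy; rewrite /Hadd.
have [nx ny] : N (ginv (rep (q x)) ** x) /\ N (ginv (rep (q y)) ** y).
  by split; apply/q_eq => //; [exact: rep0 | rewrite repK | exact: rep0 | rewrite repK].
apply/q_eq; rewrite ?hphi ?rep0 ?hx ?hy ?addr0 //.
have -> : ginv (rep (q x) ** rep (q y)) ** (x ** y) =
   (ginv (rep (q y)) ** y) ** cj y (ginv (rep (q x)) ** x).
  by rewrite /cj xinvMg !gmulA xmulgK.
by apply: NM => //; apply: N_conj.
Qed.
Lemma qV x : phi x = 0 -> Hopp (q x) = q (ginv x).
Proof.
move=> hx; rewrite /Hopp.
have nx : N (ginv (rep (q x)) ** x) by apply/q_eq => //; [exact: rep0 | rewrite repK].
apply/q_eq; rewrite ?(phiV hphi) ?rep0 ?hx ?oppr0 //.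
have -> : ginv (ginv (rep (q x))) ** ginv x = cj (ginv x) (ginv (ginv (rep (q x)) ** x)).
  by rewrite /cj !xinvgK xinvMg xinvgK gmulA xmulgV gmul1.
by apply: N_conj; apply: NV.
Qed.

Lemma Hind (P : Ht -> Prop) : (forall x, phi x = 0 -> P (q x)) -> forall X, P X.
Proof. by move=> h X; rewrite -(repK X); apply: h; apply: rep0. Qed.

Lemma HaddA : associative Hadd.
Proof.
elim/Hind=> x hx; elim/Hind=> y hy; elim/Hind=> z hz.
by rewrite !qM ?gmulA // hphi ?hx ?hy ?hz ?addr0.
Qed.
Lemma HaddC : commutative Hadd.
Proof.
elim/Hind=> x hx; elim/Hind=> y hy; rewrite !qM //; apply/q_eq; rewrite ?hphi ?hx ?hy ?addr0 //.
rewrite xinvMg; exact: Ncomm.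
Qed.
Lemma Hadd0 : left_id Hzero Hadd.
Proof. elim/Hind=> x hx; by rewrite /Hzero qM ?gmul1 // (phi1 hphi). Qed.
Lemma HaddN : left_inverse Hzero Hopp Hadd.
Proof. elim/Hind=> x hx; by rewrite qV // qM ?gmulV // (phiV hphi) hx oppr0. Qed.

HB.instance Definition _ := GRing.isZmodule.Build Ht HaddA HaddC Hadd0 HaddN.

Lemma qD x y : phi x = 0 -> phi y = 0 -> q (x ** y) = q x + q y.
Proof. by move=> hx hy; rewrite -qM. Qed.
Lemma qN x : phi x = 0 -> q (ginv x) = - q x.
Proof. by move=> hx; rewrite -qV. Qed.
Lemma q1 : q (gone pi) = 0. Proof. by []. Qed.
Lemma q0N x : phi x = 0 -> (q x = 0 <-> N x).
Proof.
move=> hx; rewrite -q1; split.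
  move/q_eq; rewrite hx (phi1 hphi) => /(_ erefl erefl); rewrite xmulg1 => /NV.
  by rewrite xinvgK.
by move=> n; apply/q_eq; rewrite ?(phi1 hphi) // xmulg1; apply: NV.
Qed.

Variable s : pi.
Definition HT (X : Ht) : Ht := q (cj s (rep X)).
Lemma qT x : phi x = 0 -> HT (q x) = q (cj s x).
Proof.
move=> hx; rewrite /HT.
have nx : N (ginv (rep (q x)) ** x) by apply/q_eq => //; [exact: rep0 | rewrite repK].
apply/q_eq; rewrite ?phi_cj ?rep0 //.
by rewrite -cjV -cjM; apply: N_conj.
Qed.
Lemma HT_sub : zmod_morphism HT.
Proof.
elim/Hind=> x hx; elim/Hind=> y hy.
rewrite -qN // -qD ?(phiV hphi) ?hy ?oppr0 // !qT ?hphi ?(phiV hphi) ?hx ?hy ?oppr0 ?addr0 //.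
by rewrite cjM cjV qD ?qN ?(phiV hphi) ?phi_cj ?hx ?hy ?oppr0.
Qed.
HB.instance Definition _ := GRing.isZmodMorphism.Build Ht Ht HT HT_sub.

Lemma HT_inj : injective HT.
Proof.
move=> X Y e; apply/eqP; rewrite -subr_eq0; apply/eqP.
move: e => /eqP; rewrite -subr_eq0 -raddfB; move: (X - Y) => {X Y}.
elim/Hind=> x hx; change (HT (q x) == 0 -> q x = 0); rewrite qT // => /eqP /(q0N _).
rewrite phi_cj => /(_ hx) /(N_conj (ginv s)); rewrite cjK => nx.
by apply/q0N.
Qed.

Lemma phi_gen_pw x n : phi x = 0 -> phi (pw x n) = 0.
Proof. by move=> hx; rewrite (phi_pw hphi) hx mulr0. Qed.
Lemma q_pw x n : phi x = 0 -> q (pw x n) = q x *+ n.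
Proof.
move=> hx; elim: n => [|n IH]; first by rewrite pw0 q1 mulr0n.
by rewrite pwS qD ?phi_gen_pw // IH mulrS.
Qed.
Lemma q_gpow x z : phi x = 0 -> phi (gpow x z) = 0 /\ q (gpow x z) = q x *~ z.
Proof.
move=> hx; case: z => n.
  by split; [exact: phi_gen_pw | exact: q_pw].
have hx' : phi (ginv x) = 0 by rewrite (phiV hphi) hx oppr0.
split; first exact: (phi_gen_pw n.+1 hx').
have -> : gpow x (Negz n) = pw (ginv x) n.+1 by [].
by rewrite q_pw // qN // NegzE mulrNz -mulNrn.
Qed.
Lemma q_tpow x i : phi x = 0 -> phi (tpow s i x) = 0 /\ q (tpow s i x) = iter i HT (q x).
Proof.
move=> hx; elim: i => [|i [h1 h2]] //=.
change (phi (cj s (tpow s i x)) = 0 /\ q (cj s (tpow s i x)) = HT (iter i HT (q x))).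
by rewrite phi_cj h1 -qT // h2.
Qed.
Lemma q_prod (I : Type) (f : I -> pi) (l : seq I) : (forall i, phi (f i) = 0) ->
  phi (prod_list (map f l)) = 0 /\ q (prod_list (map f l)) = \sum_(i <- l) q (f i).
Proof.
move=> hf; elim: l => [|i l [h1 h2]] /=; first by rewrite big_nil (phi1 hphi).
by rewrite big_cons hphi h1 hf addr0 qD // h2.
Qed.

Definition sc (p : {poly int}) (h : Ht) : Ht := \sum_(i < size p) (iter i HT h) *~ p`_i.

Lemma q_act p x : phi x = 0 -> phi (act s p x) = 0 /\ q (act s p x) = sc p (q x).
Proof.
move=> hx; rewrite /act.
have hf : forall i, phi (gpow (tpow s i x) p`_i) = 0.
  by move=> i; case: (q_tpow i hx) => h1 _; case: (q_gpow p`_i h1).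
case: (@q_prod _ (fun i => gpow (tpow s i x) p`_i) (iota 0 (size p)) hf) => h1 h2.
split=> //; rewrite h2 /sc -(big_mkord xpredT (fun i => iter i HT (q x) *~ p`_i)).
rewrite /index_iota subn0; apply: eq_bigr => i _.
have [h3 h4] := q_tpow i hx; by rewrite (proj2 (q_gpow _ h3)) h4.
Qed.

Lemma q_evalv n (k : 'I_n -> pi) (v : 'rV[{poly int}]_n) : (forall j, phi (k j) = 0) ->
  phi (evalv s k v) = 0 /\ q (evalv s k v) = \sum_(j <- enum 'I_n) sc (v ord0 j) (q (k j)).
Proof.
move=> hk; rewrite /evalv.
have hf : forall j, phi (act s (v ord0 j) (k j)) = 0 by move=> j; case: (q_act (v ord0 j) (hk j)).
case: (@q_prod _ (fun j => act s (v ord0 j) (k j)) (enum 'I_n) hf) => h1 h2.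
split=> //; rewrite h2; apply: eq_bigr => j _; by case: (q_act (v ord0 j) (hk j)).
Qed.

Lemma q_cj x y : phi x = 0 -> phi y = 0 -> q (cj y x) = q x.
Proof.
move=> hx hy; have hy' : phi (ginv y) = 0 by rewrite (phiV hphi) hy oppr0.
have hxy : phi (ginv y ** x) = 0 by rewrite hphi hy' hx addr0.
by rewrite /cj qD // qD // qN // addrC addNKr.
Qed.

Lemma qcj_change t x : phi x = 0 -> phi t = phi s -> q (cj s x) = q (cj t x).
Proof.
move=> hx ht; set k := ginv t ** s.
have hk : phi k = 0 by rewrite /k hphi (phiV hphi) ht addNr.
have -> : cj s x = cj k (cj t x) by rewrite /cj /k xinvMg xinvgK !gmulA !xmulgK.
by rewrite q_cj // phi_cj.
Qed.

Lemma L_iter t N z : phi t = phi s -> phi z = 0 ->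
  iter N HT (q z) = q (pw (ginv t) N ** z ** pw t N).
Proof.
move=> ht hz; elim: N => [|N IH]; first by rewrite !pw0 gmul1 xmulg1.
have hw : phi (pw (ginv t) N ** z ** pw t N) = 0.
  by rewrite !hphi !(phi_pw hphi) (phiV hphi) hz mulrN addr0 addNr.
by rewrite iterS IH qT // (qcj_change hw ht) /cj pwS pwSr !gmulA.
Qed.

Lemma iter_HT_inj N x : iter N HT x = 0 -> x = 0.
Proof.
elim: N x => [|N IH] x //= e; apply: IH; apply: HT_inj.
by rewrite e; symmetry; exact: (raddf0 HT).
Qed.

Lemma span (B : group) (iota : B -> pi) (R : nat) (gB : 'I_R -> B)
   (r : nat) (hh : 'I_r -> Ht) :
  is_hom iota -> (forall b, phi (iota b) = 0) ->
  (forall x, gen (fun y => exists i, y = gB i) x) ->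
  (forall i, exists j, hh j = q (iota (gB i))) ->
  forall b, exists c : 'I_r -> int, q (iota b) = \sum_j hh j *~ c j.
Proof.
move=> hiota hi0 hgen hcov b; elim: (hgen b) => {b}.
- move=> x [i ->]; have [j hj] := hcov i.
  exists (fun l => (l == j)%:Z); rewrite (bigD1 j) //= eqxx mulr1z big1 ?addr0 //.
  by move=> l /negbTE ->; rewrite mulr0z.
- exists (fun _ => 0); rewrite (hom1 hiota) q1 big1 // => j _; by rewrite mulr0z.
- move=> x y _ [c1 e1] _ [c2 e2]; exists (fun j => c1 j + c2 j).
  rewrite hiota qD // e1 e2 -big_split /=; apply: eq_bigr => j _; by rewrite mulrzDr.
- move=> x _ [c e]; exists (fun j => - c j).
  rewrite (homV hiota) qN // e -sumrN; apply: eq_bigr => j _; by rewrite mulrNz.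
Qed.

Lemma core n m (k : 'I_n -> pi) (A : 'M[{poly int}]_(m, n)) d g :
  presents phi s k A -> gcd_minors A d ->
  (forall y, phi y = 0 -> scg HT g (q y) = 0) ->
  exists a, ldvd d ('X^a * g ^+ n).
Proof.
move=> [hk _ _ hcomp] [hd _] hann.
have hv : forall j, exists Nw : nat * 'rV[{poly int}]_m,
   'X^(Nw.1) *: (\row_l (if l == j then g else 0)) = Nw.2 *m A.
  move=> j; set v := \row_l (if l == j then g else 0).
  have : in_commK phi (evalv s k v).
    have [h1 h2] := q_evalv v hk; apply/(q0N h1); rewrite h2 big1_seq // => l _.
    rewrite /v mxE; case: eqP => [->|_]; [exact: (hann _ (hk _)) | exact: (scg0p HT)].
  by move/hcomp => [N [w e]]; exists (N, w).
have [Nw hNw] := fin_all_exists hv.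
pose W := \matrix_(j, l) (Nw j).2 ord0 l.
have eWA : W *m A = diag_mx (\row_j ('X^((Nw j).1) * g)).
  apply/matrixP => j l; rewrite !mxE.
  have := congr1 (fun M : 'rV[{poly int}]_n => M ord0 l) (hNw j); rewrite !mxE => e.
  apply: etrans (_ : \sum_r (Nw j).2 ord0 r * A r l = _).
    by apply: eq_bigr => r _; rewrite mxE.
  by rewrite -e [j == l]eq_sym; case: (l == j); rewrite ?mulr1n ?mulr0 ?mulr0n.
have hdet : ldvd d (\det (W *m A)).
  rewrite det_expand; apply: ldvd_sum => f; apply: ldvd_mull; exact: hd.
exists (\sum_j (Nw j).1)%N.
move: hdet; rewrite eWA det_diag.
rewrite (eq_bigr (fun j => 'X^((Nw j).1) * g)); last by move=> j _; rewrite mxE.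
by rewrite big_split /= -prodrXr prodr_const card_ord.
Qed.

Hypothesis hs : phi s = 1.

Lemma ann_asc : ascHNN phi ->
  exists g : {poly int}, g \is monic /\ forall y, phi y = 0 -> scg HT g (q y) = 0.
Proof.
case=> B [psi [iota [t [[hfg [hpsi [hinj hiota]]] ht hi0 hrel U]]]].
have hts : phi t = phi s by rewrite ht hs.
have hgen := @gen_univ true _ _ _ _ _ hiota hrel U.
have [R [gB hgB]] := hfg.
pose gB' (i : 'I_R.+1) := oapp gB (gone B) (unlift ord_max i).
pose h i := q (iota (gB' i)).
have hcov : forall i, exists j, h j = q (iota (gB i)).
  by move=> i; exists (lift ord_max i); rewrite /h /gB' liftK.
have hsp := span hiota hi0 hgB hcov.
have [c hc] := fin_all_exists (fun i => hsp (psi (gB' i))).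
pose C := \matrix_(i, j) c i j.
have hrelC : forall i, HT (h i) = lin h (fun a b => C a b) i.
  move=> i; rewrite /h qT ?hi0 // (qcj_change (hi0 _) hts).
  have -> : cj t (iota (gB' i)) = iota (psi (gB' i)) by exact: hrel.
  rewrite hc /lin; apply: eq_bigr => j _; by rewrite mxE.
have hann := asc_ann hrelC.
exists (char_poly C); split; first exact: char_poly_monic.
move=> y hy.
have hS : forall y, (y = t \/ exists b, y = iota b) -> [\/ y = t, y = ginv t | exists b, y = iota b].
  by move=> z [->|[b ->]]; [apply: Or31 | apply: Or33; exists b].
have [N [M [b ey]]] := gen_NF hiota hrel hS (hgen y).
have eNM : N = M.
  move: hy; rewrite ey !hphi !(phi_pw hphi) hi0 (phiV hphi) ht mulr1 addr0 mulrN1.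
  by move/eqP; rewrite subr_eq0 => /eqP [].
subst M.
have e1 : iter N HT (q y) = q (iota b).
  rewrite (L_iter N hts hy) ey !gmulA pwVK gmul1 -gmulA pwVK xmulg1 //.
have [c' hc'] := hsp b.
apply: (@iter_HT_inj N); rewrite -(scg_iter HT) e1 hc' scg_sum big1 // => j _.
by rewrite scg_mulz hann mul0rz.
Qed.

Lemma ann_desc : descHNN phi ->
  exists g : {poly int}, g`_0 = 1 /\ forall y, phi y = 0 -> scg HT g (q y) = 0.
Proof.
case=> B [psi [iota [t [[hfg [hpsi [hinj hiota]]] ht hi0 hrel U]]]].
have hts : phi t = phi s by rewrite ht hs.
have hgen := @gen_univ false _ _ _ _ _ hiota hrel U.
have hrel' : forall b, ginv (ginv t) ** iota b ** ginv t = iota (psi b).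
  by move=> b; rewrite xinvgK; exact: hrel.
have [R [gB hgB]] := hfg.
pose gB' (i : 'I_R.+1) := oapp gB (gone B) (unlift ord_max i).
pose h i := q (iota (gB' i)).
have hcov : forall i, exists j, h j = q (iota (gB i)).
  by move=> i; exists (lift ord_max i); rewrite /h /gB' liftK.
have hsp := span hiota hi0 hgB hcov.
have [c hc] := fin_all_exists (fun i => hsp (psi (gB' i))).
pose C := \matrix_(i, j) c i j.
have hrelC : forall i, h i = HT (lin h (fun a b => C a b) i).
  move=> i.
  have -> : lin h (fun a b => C a b) i = q (iota (psi (gB' i))).
    rewrite hc /lin; apply: eq_bigr => j _; by rewrite mxE.
  rewrite qT ?hi0 // (qcj_change (hi0 _) hts) -(hrel (gB' i)) /h /cj /wconj.
  by rewrite !gmulA gmulV gmul1 xmulgKV.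
have hann := desc_ann hrelC.
exists (revchi C); split; first exact: revchi0.
move=> y hy.
have hS : forall y, (y = t \/ exists b, y = iota b) ->
    [\/ y = ginv t, y = ginv (ginv t) | exists b, y = iota b].
  by move=> z [->|[b ->]]; [apply: Or32; rewrite xinvgK | apply: Or33; exists b].
have [N [M [b ey]]] := gen_NF hiota hrel' hS (hgen y).
rewrite xinvgK in ey.
have eNM : N = M.
  move: hy; rewrite ey !hphi !(phi_pw hphi) hi0 (phiV hphi) ht mulr1 addr0 mulrN1.
  by move/eqP; rewrite addrC subr_eq0 => /eqP [].
subst M.
have e1 : q y = iter N HT (q (iota b)) by rewrite (L_iter N hts (hi0 b)) ey.
have [c' hc'] := hsp b.
rewrite e1 (scg_iter HT) hc' scg_sum big1; first by elim: (N) => //= N' ->; exact: (raddf0 HT).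
by move=> j _; rewrite scg_mulz hann mul0rz.
Qed.

Lemma final_asc n m (k : 'I_n -> pi) (A : 'M[{poly int}]_(m, n)) d :
  ascHNN phi -> presents phi s k A -> gcd_minors A d -> top_coef d = 1 \/ top_coef d = -1.
Proof.
move=> hA hp hg; have [g [gm hann]] := ann_asc hA.
have [a hd] := core hp hg hann.
exact: (top_ldvd (monic_exp n gm) hd).
Qed.

Lemma final_desc n m (k : 'I_n -> pi) (A : 'M[{poly int}]_(m, n)) d :
  descHNN phi -> presents phi s k A -> gcd_minors A d -> bot_coef d = 1 \/ bot_coef d = -1.
Proof.
move=> hA hp hg; have [g [g0 hann]] := ann_desc hA.
have [a hd] := core hp hg hann.
apply: (bot_ldvd _ hd).
by rewrite -horner_coef0 horner_exp horner_coef0 g0 expr1n.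
Qed.
End Quot.

Theorem lemma4p1 (pi : group) (phi : pi -> int) :
  is_epi_Z phi ->
  (ascHNN phi ->
     forall d : {poly int}, is_alex_poly phi d ->
       top_coef d = 1 \/ top_coef d = -1) /\
  (descHNN phi ->
     forall d : {poly int}, is_alex_poly phi d ->
       bot_coef d = 1 \/ bot_coef d = -1).
Proof.
move=> [hphi _]; split.
  move=> hA d [s [n [m [k [A [hs hp hg]]]]]]; exact: (final_asc hphi hs hA hp hg).
move=> hD d [s [n [m [k [A [hs hp hg]]]]]]; exact: (final_desc hphi hs hD hp hg).
Qed.
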